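(* If a solution $(x_1(t),x_2(t),x_3(t))$ of the Ricci flow system $\frac{dx_i}{dt}=-2r_ix_i$ satisfies $x_2(0)>x_1(0)>x_3(0)>0$, then $x_2(t)>x_1(t)>x_3(t)$ for all $t$ in its interval of existence. The same holds for the volume-normalized Ricci flow.
   Context: Here $d\in\{2,4,8\}$. For positive reals $x_1,x_2,x_3$ and $\{i,j,k\}=\{1,2,3\}$, define $$r_i=\frac{d x_i^2-d x_j^2-d x_k^2+(10d-8)x_jx_k}{2x_1x_2x_3}.$$ The Ricci flow of the $G$-invariant metrics $\sum_i x_i\langle\cdot,\cdot\rangle_0|_{V_i}$ on the flag manifolds $G/K$ is the ODE system $\frac{dx_i}{dt}=-2r_ix_i$. *)

(* Defs.v *)
From Stdlib Require Import Reals.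
Open Scope R_scope.

Definition ric (d x1 x2 x3 xi xj xk : R) : R :=
  (d * xi ^ 2 - d * xj ^ 2 - d * xk ^ 2 + (10 * d - 8) * xj * xk)
  / (2 * x1 * x2 * x3).

Definition r1 (d x1 x2 x3 : R) : R := ric d x1 x2 x3 x1 x2 x3.
Definition r2 (d x1 x2 x3 : R) : R := ric d x1 x2 x3 x2 x1 x3.
Definition r3 (d x1 x2 x3 : R) : R := ric d x1 x2 x3 x3 x1 x2.

(* Scalar curvature S = sum_i d_i r_i with d_i = dim V_i = d, and
   n = dim G/K = 3d. *)
Definition scal (d x1 x2 x3 : R) : R :=
  d * (r1 d x1 x2 x3 + r2 d x1 x2 x3 + r3 d x1 x2 x3).
Definition dimGK (d : R) : R := 3 * d.

Definition ricci_flow_sol (d a b : R) (x1 x2 x3 : R -> R) : Prop :=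
  forall t, a < t < b ->
    0 < x1 t /\ 0 < x2 t /\ 0 < x3 t /\
    derivable_pt_lim x1 t (-2 * r1 d (x1 t) (x2 t) (x3 t) * x1 t) /\
    derivable_pt_lim x2 t (-2 * r2 d (x1 t) (x2 t) (x3 t) * x2 t) /\
    derivable_pt_lim x3 t (-2 * r3 d (x1 t) (x2 t) (x3 t) * x3 t).

Definition normalized_ricci_flow_sol (d a b : R) (x1 x2 x3 : R -> R) : Prop :=
  forall t, a < t < b ->
    let S := scal d (x1 t) (x2 t) (x3 t) in
    0 < x1 t /\ 0 < x2 t /\ 0 < x3 t /\
    derivable_pt_lim x1 t
      (-2 * r1 d (x1 t) (x2 t) (x3 t) * x1 t + 2 * S / dimGK d * x1 t) /\
    derivable_pt_lim x2 t
      (-2 * r2 d (x1 t) (x2 t) (x3 t) * x2 t + 2 * S / dimGK d * x2 t) /\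
    derivable_pt_lim x3 t
      (-2 * r3 d (x1 t) (x2 t) (x3 t) * x3 t + 2 * S / dimGK d * x3 t).

(* Main.v *)
Require Import Defs.
From Stdlib Require Import Reals Lra.
From Coquelicot Require Import Coquelicot.
Open Scope R_scope.
Open Scope R_scope.

Lemma derivable_pt_lim_eq_val f x l l' : derivable_pt_lim f x l -> l = l' -> derivable_pt_lim f x l'.
Proof. intros H ->; exact H. Qed.

Lemma pos_pres (a b:R) (y g: R->R): a<0<b ->
  (forall t, a<t<b -> derivable_pt_lim y t (y t * g t)) ->
  (forall t, a<t<b -> continuity_pt g t) -> y 0 > 0 -> forall t, a<t<b -> y t > 0.
Proof.
intros Hab Hy Hg H0.
assert (Hc : forall t, a<t<b -> continuous g t).
{ intros t Ht. apply continuity_pt_filterlim. now apply Hg. }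
assert (Hex : forall u, a<u<b -> ex_RInt g 0 u).
{ intros u Hu. apply (@ex_RInt_continuous R_CompleteNormedModule). intros z Hz. apply Hc.
  unfold Rmin, Rmax in Hz; destruct (Rle_dec 0 u); lra. }
assert (HI : forall t, a<t<b -> is_derive (fun u => RInt g 0 u) t (g t)).
{ intros t Ht. apply (is_derive_RInt g _ 0); [|now apply Hc].
  assert (He : 0 < Rmin (t-a) (b-t)) by (apply Rmin_pos; lra).
  exists (mkposreal _ He). intros u Hu. apply (@RInt_correct R_CompleteNormedModule). apply Hex.
  change (Rabs (u - t) < Rmin (t-a) (b-t)) in Hu.
  apply Rabs_def2 in Hu. destruct Hu as [H1 H2].
  pose proof (Rmin_l (t-a) (b-t)). pose proof (Rmin_r (t-a) (b-t)). lra. }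
set (h := fun u => y u * exp (- RInt g 0 u)).
assert (Hh : forall t, a<t<b -> is_derive h t 0).
{ intros t Ht. pose proof (proj1 (is_derive_Reals _ _ _) (HI t Ht)) as HIt.
  apply is_derive_Reals.
  replace 0 with (y t * g t * exp (- RInt g 0 t) + y t * (exp (- RInt g 0 t) * (- g t))) by ring.
  unfold h.
  apply (derivable_pt_lim_mult y (fun u => exp (- RInt g 0 u))); [now apply Hy|].
  apply (derivable_pt_lim_comp (fun u => - RInt g 0 u) exp).
  - apply (derivable_pt_lim_opp (fun u => RInt g 0 u)). exact HIt.
  - apply derivable_pt_lim_exp. }
intros t Ht.
destruct (MVT_gen h 0 t (fun _ => 0)) as [c [Hc1 Hc2]].
- intros x Hx. apply Hh. unfold Rmin, Rmax in Hx; destruct (Rle_dec 0 t); lra.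
- intros x Hx. apply derivable_continuous_pt.
  exists 0. apply is_derive_Reals. apply Hh. unfold Rmin, Rmax in Hx; destruct (Rle_dec 0 t); lra.
- assert (h0 : h 0 = y 0).
  { unfold h. rewrite RInt_point. unfold zero; simpl. rewrite Ropp_0, exp_0. ring. }
  rewrite h0 in Hc2. unfold h in Hc2.
  assert (E : 0 < exp (- RInt g 0 t)) by apply exp_pos.
  destruct (Rle_lt_dec (y t) 0) as [Hn|]; [|lra].
  assert (y t * exp (- RInt g 0 t) <= 0) by (apply Rmult_le_0_r; lra). lra.
Qed.

Lemma cont_of (f : R -> R) t : ex_derive f t -> continuity_pt f t.
Proof. intro H. apply continuity_pt_filterlim. now apply (@ex_derive_continuous R_AbsRing R_NormedModule). Qed.

Definition Q (d x1 x2 x3 : R) := - d * (x1^2 + 2*x1*x2 + x2^2 - x3^2) / (x1*x2*x3).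
Definition Nm (d x1 x2 x3 : R) := (- d * (x1^2+x2^2+x3^2) + (10*d-8)*(x1*x2+x1*x3+x2*x3)) / (3*(x1*x2*x3)).

Ltac contx Hs s Hs' := destruct (Hs s Hs') as (p1&p2&p3&D1&D2&D3);
    apply cont_of; unfold Q, Nm; auto_derive;
    repeat split; try (eexists; apply is_derive_Reals; eassumption);
    try (apply Rgt_not_eq; repeat apply Rmult_lt_0_compat; lra).

Lemma unnorm d a b x1 x2 x3 : a < 0 < b -> ricci_flow_sol d a b x1 x2 x3 ->
  x2 0 > x1 0 /\ x1 0 > x3 0 /\ x3 0 > 0 -> forall t, a < t < b -> x2 t > x1 t /\ x1 t > x3 t.
Proof.
intros Hab Hs [H1 [H2 H3]] t Ht. split.
- cut (x2 t - x1 t > 0); [lra|].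
  apply (pos_pres a b (fun u => x2 u - x1 u) (fun u => Q d (x1 u) (x2 u) (x3 u))); auto; [| |lra].
  + intros s Hs'. destruct (Hs s Hs') as (p1&p2&p3&D1&D2&D3).
    replace ((x2 s - x1 s) * Q d (x1 s) (x2 s) (x3 s)) with
      (-2 * r2 d (x1 s) (x2 s) (x3 s) * x2 s - (-2 * r1 d (x1 s) (x2 s) (x3 s) * x1 s)).
    * now apply (derivable_pt_lim_minus x2 x1).
    * unfold Q, r1, r2, ric. field. repeat split; lra.
  + intros s Hs'. contx Hs s Hs'.
- cut (x1 t - x3 t > 0); [lra|].
  apply (pos_pres a b (fun u => x1 u - x3 u) (fun u => Q d (x1 u) (x3 u) (x2 u))); auto; [| |lra].
  + intros s Hs'. destruct (Hs s Hs') as (p1&p2&p3&D1&D2&D3).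
    replace ((x1 s - x3 s) * Q d (x1 s) (x3 s) (x2 s)) with
      (-2 * r1 d (x1 s) (x2 s) (x3 s) * x1 s - (-2 * r3 d (x1 s) (x2 s) (x3 s) * x3 s)).
    * now apply (derivable_pt_lim_minus x1 x3).
    * unfold Q, r1, r3, ric. field. repeat split; lra.
  + intros s Hs'. contx Hs s Hs'.
Qed.

Lemma norm d a b x1 x2 x3 : d <> 0 -> a < 0 < b -> normalized_ricci_flow_sol d a b x1 x2 x3 ->
  x2 0 > x1 0 /\ x1 0 > x3 0 /\ x3 0 > 0 -> forall t, a < t < b -> x2 t > x1 t /\ x1 t > x3 t.
Proof.
intros Hd Hab Hs [H1 [H2 H3]] t Ht. split.
- cut (x2 t - x1 t > 0); [lra|].
  apply (pos_pres a b (fun u => x2 u - x1 u) (fun u => Q d (x1 u) (x2 u) (x3 u) + Nm d (x1 u) (x2 u) (x3 u))); auto; [| |lra].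
  + intros s Hs'. destruct (Hs s Hs') as (p1&p2&p3&D1&D2&D3).
    eapply derivable_pt_lim_eq_val; [apply (derivable_pt_lim_minus x2 x1); eassumption|].
    unfold Q, Nm, Defs.scal, dimGK, r1, r2, r3, ric. field. repeat split; lra.
  + intros s Hs'. contx Hs s Hs'.
- cut (x1 t - x3 t > 0); [lra|].
  apply (pos_pres a b (fun u => x1 u - x3 u) (fun u => Q d (x1 u) (x3 u) (x2 u) + Nm d (x1 u) (x2 u) (x3 u))); auto; [| |lra].
  + intros s Hs'. destruct (Hs s Hs') as (p1&p2&p3&D1&D2&D3).
    eapply derivable_pt_lim_eq_val; [apply (derivable_pt_lim_minus x1 x3); eassumption|].
    unfold Q, Nm, Defs.scal, dimGK, r1, r2, r3, ric. field. repeat split; lra.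
  + intros s Hs'. contx Hs s Hs'.
Qed.

Theorem mainTheorem8 :
  forall (d : R), (d = 2 \/ d = 4 \/ d = 8) ->
  (forall (a b : R) (x1 x2 x3 : R -> R),
     a < 0 < b ->
     ricci_flow_sol d a b x1 x2 x3 ->
     x2 0 > x1 0 /\ x1 0 > x3 0 /\ x3 0 > 0 ->
     forall t, a < t < b -> x2 t > x1 t /\ x1 t > x3 t) /\
  (forall (a b : R) (x1 x2 x3 : R -> R),
     a < 0 < b ->
     normalized_ricci_flow_sol d a b x1 x2 x3 ->
     x2 0 > x1 0 /\ x1 0 > x3 0 /\ x3 0 > 0 ->
     forall t, a < t < b -> x2 t > x1 t /\ x1 t > x3 t).
Proof.
intros d Hd. split.
- intros; eapply unnorm; eauto.
- intros a b x1 x2 x3 ? ? ?; apply (norm d a b x1 x2 x3); auto; lra.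
Qed.
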